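(* Assume $G$ is strongly connected, $r=1$ (neutral drift), and $C\subseteq V$ with $F_C>0$. Let $P_{\min,t}=\min_{i\in V}P_{i,t|C}$. Then $$\frac{1}{F_C}\sum_{t=1}^{\infty}t\,\big(P_{\min,t}-P_{\min,t-1}\big)\;\le\;\frac{1}{F_C}\sum_{t=1}^{\infty}t\,\big(F_{t|C}-F_{t-1|C}\big)=t_C .$$
   Context: Let $G=(V,E)$ be a finite directed graph with $N=|V|$ vertices and weight matrix $W=[w_{ij}]$, $w_{ij}>0$ iff $(i,j)\in E$, $\sum_j w_{ij}=1$ for all $i$. A configuration is a set of mutants. In the neutral-drift birth–death process started from configuration $C$ at time $0$, at each step a vertex $i$ is selected uniformly at random, then $j$ is chosen with probability $w_{ij}$ and $j$ takes the type of $i$. $P_{i,t|C}$ is the probability that $i$ is a mutant at time $t$. $F_{t|C}$ is the probability that all vertices are mutants at time $t$ (fixation has occurred by time $t$), $F_C=\lim_{t\to\infty}F_{t|C}$ is the fixation probability, and $t_C=\frac{1}{F_C}\sum_{t\ge1}t(F_{t|C}-F_{t-1|C})$ is the mean time to fixation conditioned on fixation. *)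

(* Defs.v *)
From Stdlib Require Import Reals Lra Lia Arith List.
Open Scope R_scope.

(* Vertices are 0, ..., N-1.  A weight matrix is W : nat -> nat -> R,
   only entries with indices < N matter. *)

Fixpoint sumN (n : nat) (f : nat -> R) : R :=
  match n with
  | O => 0
  | S m => sumN m f + f m
  end.

Definition edge (W : nat -> nat -> R) (i j : nat) : Prop := 0 < W i j.

Inductive reach (N : nat) (W : nat -> nat -> R) (i : nat) : nat -> Prop :=
  | reach_refl : reach N W i i
  | reach_step : forall j k, reach N W i j -> (k < N)%nat -> edge W j k ->
                 reach N W i k.

Definition strongly_connected (N : nat) (W : nat -> nat -> R) : Prop :=
  forall i j, (i < N)%nat -> (j < N)%nat -> reach N W i j.

Definition weight_matrix (N : nat) (W : nat -> nat -> R) : Prop :=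
  (forall i j, (i < N)%nat -> (j < N)%nat -> 0 <= W i j) /\
  (forall i, (i < N)%nat -> sumN N (fun j => W i j) = 1).

(* A configuration: the set of mutants, as a characteristic function. *)
Definition config := nat -> bool.

Definition update (C : config) (i j : nat) : config :=
  fun k => if Nat.eqb k j then C i else C k.

(* Neutral-drift (r = 1) birth-death process, t-step expectation of an
   observable g started from configuration C (Kolmogorov backward recursion):
   E_0[g](C) = g C,
   E_{t+1}[g](C) = sum_{i,j} (1/N) w_ij E_t[g](C with j taking the type of i). *)
Fixpoint expect (N : nat) (W : nat -> nat -> R) (g : config -> R)
    (t : nat) (C : config) : R :=
  match t with
  | O => g C
  | S t' => sumN N (fun i => sumN N (fun j =>
              / INR N * W i j * expect N W g t' (update C i j)))
  end.

Definition indic (b : bool) : R := if b then 1 else 0.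

Definition Pmut (N : nat) (W : nat -> nat -> R) (i t : nat) (C : config) : R :=
  expect N W (fun D => indic (D i)) t C.

Definition all_mutant (N : nat) (D : config) : bool :=
  forallb (fun k => D k) (seq 0 N).

Definition Ffix (N : nat) (W : nat -> nat -> R) (t : nat) (C : config) : R :=
  expect N W (fun D => indic (all_mutant N D)) t C.

(* P_{min,t} = min_{i in V} P_{i,t|C}  (for N >= 1) *)
Definition Pmin (N : nat) (W : nat -> nat -> R) (t : nat) (C : config) : R :=
  fold_right Rmin (Pmut N W 0 t C)
    (map (fun i => Pmut N W i t C) (seq 1 (N - 1))).

Definition mean_fix_time (N : nat) (W : nat -> nat -> R) (C : config)
    (FC tC : R) : Prop :=
  exists Sm, infinite_sum
      (fun t => INR (S t) * (Ffix N W (S t) C - Ffix N W t C)) Sm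
    /\ tC = Sm / FC.

(* Main.v *)
Require Import Defs.
From Stdlib Require Import Reals.
Open Scope R_scope.
From Stdlib Require Import Lra Lia Arith List.
From Coquelicot Require Import Coquelicot.

Lemma geom_sum_closed (r : R) (n : nat) : r <> 1 ->
  sum_f_R0 (fun k => INR (S k) * r ^ k) n =
  (1 - INR (S (S n)) * r ^ (S n) + INR (S n) * r ^ (S (S n))) / ((1 - r) * (1 - r)).
Proof.
  intro Hr. assert (1 - r <> 0) by lra.
  induction n as [|n IH].
  - simpl. field. auto.
  - rewrite tech5, IH. rewrite !S_INR. simpl. field. auto.
Qed.

Lemma ser_g (r : R) : 0 <= r < 1 -> ex_series (fun k => INR (S k) * r ^ k).
Proof.
  intros Hr.
  destruct (growing_cv (sum_f_R0 (fun k => INR (S k) * r ^ k))) as [l Hl].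
  - intro n. rewrite tech5. assert (0 <= INR (S (S n)) * r ^ S n).
    { apply Rmult_le_pos. apply pos_INR. apply pow_le; lra. } lra.
  - exists (1 / ((1 - r) * (1 - r))). intros x [n ->].
    rewrite geom_sum_closed by lra.
    unfold Rdiv. apply Rmult_le_compat_r.
    { left. apply Rinv_0_lt_compat. nra. }
    assert (INR (S n) * r ^ S (S n) <= INR (S (S n)) * r ^ S n); [|lra].
    change (r ^ S (S n)) with (r * r ^ S n).
    assert (0 <= r ^ S n) by (apply pow_le; lra).
    rewrite S_INR with (n := S n). assert (0 <= INR (S n)) by apply pos_INR.
    assert (INR (S n) * (r * r ^ S n) <= INR (S n) * r ^ S n) by (apply Rmult_le_compat_l; nra).
    nra.
  - exists l. apply is_series_Reals. exact Hl.
Qed.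

Lemma psum_id (x : nat -> R) (n : nat) :
  sum_f_R0 (fun t => INR (S t) * (x (S t) - x t)) n = INR (S n) * x (S n) - sum_f_R0 x n.
Proof.
  induction n as [|n IH]. simpl. ring.
  rewrite tech5, IH, tech5. rewrite !S_INR. ring.
Qed.

Lemma abstract_main (x y u : nat -> R) (K r : R) :
  0 <= r < 1 -> 0 <= K ->
  (forall t, u t <= K * r ^ t) ->
  (forall t, y t <= x t <= y t + u t) ->
  (forall t, Rabs (y (S t) - y t) <= 3 * K * r ^ t) ->
  (forall t, Rabs (x (S t) - x t) <= 3 * K * r ^ t) ->
  exists L Sm, infinite_sum (fun t => INR (S t) * (x (S t) - x t)) L /\
    infinite_sum (fun t => INR (S t) * (y (S t) - y t)) Sm /\ L <= Sm.
Proof.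
  intros Hr HK Hu Hxy Hy Hx.
  pose proof (ser_g r Hr) as Hg.
  assert (Hg3 : ex_series (fun k => 3 * K * (INR (S k) * r ^ k))).
  { destruct Hg as [l Hl]. exists (3 * K * l). apply (is_series_scal_l (3*K)) in Hl. exact Hl. }
  assert (Ex : forall z : nat -> R, (forall t, Rabs (z (S t) - z t) <= 3 * K * r ^ t) ->
     exists l, infinite_sum (fun t => INR (S t) * (z (S t) - z t)) l).
  { intros z Hz. destruct (ex_series_le (V := R_CompleteNormedModule) (fun t => INR (S t) * (z (S t) - z t)) (fun k => 3 * K * (INR (S k) * r ^ k))) as [l Hl]; [| exact Hg3 |].
    - intro n. change (norm (INR (S n) * (z (S n) - z n))) with (Rabs (INR (S n) * (z (S n) - z n))).
      rewrite Rabs_mult, Rabs_right by (apply Rle_ge, pos_INR).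
      specialize (Hz n). assert (0 <= INR (S n)) by apply pos_INR. nra.
    - exists l. apply is_series_Reals. exact Hl. }
  destruct (Ex x Hx) as [L HL]. destruct (Ex y Hy) as [Sm HS].
  exists L, Sm. split; [exact HL|]. split; [exact HS|].
  assert (H0 : Un_cv (fun k => K * (INR (S k) * r ^ k)) 0).
  { apply is_lim_seq_Reals. replace (Finite 0) with (Rbar_mult K 0) by (simpl; f_equal; ring).
    apply is_lim_seq_scal_l. apply ex_series_lim_0. exact Hg. }
  rewrite <- (Rplus_0_r Sm).
  apply (@Rle_cv_lim (fun n => sum_f_R0 (fun t => INR (S t) * (x (S t) - x t)) n)
     (fun n => sum_f_R0 (fun t => INR (S t) * (y (S t) - y t)) n + K * (INR (S n) * r ^ n)) L (Sm + 0)).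
  - intro n. rewrite !psum_id.
    assert (0 <= sum_f_R0 (fun t => x t - y t) n).
    { apply cond_pos_sum. intro t. specialize (Hxy t). lra. }
    rewrite minus_sum in H.
    pose proof (Hxy (S n)). pose proof (Hu (S n)).
    assert (r ^ S n <= r ^ n). { simpl. assert (0 <= r ^ n) by (apply pow_le; lra). nra. }
    assert (0 <= INR (S n)) by apply pos_INR.
    assert (K * r ^ S n <= K * r ^ n) by (apply Rmult_le_compat_l; lra).
    assert (INR (S n) * u (S n) <= INR (S n) * (K * r ^ n)) by (apply Rmult_le_compat_l; lra).
    assert (INR (S n) * u (S n) <= K * (INR (S n) * r ^ n)) by (rewrite <- Rmult_assoc, (Rmult_comm K), Rmult_assoc; lra).
    assert (INR (S n) * (x (S n) - y (S n)) <= INR (S n) * u (S n)) by (apply Rmult_le_compat_l; lra).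
    lra.
  - exact HL.
  - apply CV_plus; [exact HS | exact H0].
Qed.

Lemma sumN_ext n f g : (forall k, (k < n)%nat -> f k = g k) -> sumN n f = sumN n g.
Proof. induction n; simpl; intros H; auto. rewrite IHn, H; auto. Qed.

Lemma sumN_le n f g : (forall k, (k < n)%nat -> f k <= g k) -> sumN n f <= sumN n g.
Proof. induction n; simpl; intros H. lra. pose proof (H n ltac:(lia)). pose proof (IHn ltac:(intros; apply H; lia)). lra. Qed.

Lemma sumN_plus n f g : sumN n (fun k => f k + g k) = sumN n f + sumN n g.
Proof. induction n; simpl. lra. rewrite IHn. ring. Qed.

Lemma sumN_scal n a f : sumN n (fun k => a * f k) = a * sumN n f.
Proof. induction n; simpl. ring. rewrite IHn. ring. Qed.

Lemma sumN_const n c : sumN n (fun _ => c) = INR n * c.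
Proof. induction n; simpl sumN. simpl; ring. rewrite IHn, S_INR. ring. Qed.

Lemma sumN_ge_term n f k : (forall k, (k < n)%nat -> 0 <= f k) -> (k < n)%nat -> f k <= sumN n f.
Proof.
  induction n; intros H Hk. lia. simpl.
  assert (0 <= sumN n f).
  { replace 0 with (sumN n (fun _ => 0)) by (rewrite sumN_const; ring). apply sumN_le. intros; apply H; lia. }
  destruct (Nat.eq_dec k n). subst. lra.
  pose proof (IHn ltac:(intros; apply H; lia) ltac:(lia)). pose proof (H n ltac:(lia)). lra.
Qed.

Lemma expect_S N W g t C : expect N W g (S t) C =
  sumN N (fun i => sumN N (fun j => / INR N * W i j * expect N W g t (update C i j))).
Proof. reflexivity. Qed.

Section Chain.
Variable N : nat.
Variable W : nat -> nat -> R.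
Hypothesis HN : (0 < N)%nat.
Hypothesis HW : weight_matrix N W.

Lemma INRN_pos : 0 < INR N.
Proof. apply lt_0_INR. exact HN. Qed.

Lemma E_ext f g : (forall D, f D = g D) -> forall t C, expect N W f t C = expect N W g t C.
Proof.
  intros H t; induction t; intro C. simpl. apply H.
  rewrite !expect_S. apply sumN_ext; intros; apply sumN_ext; intros. rewrite IHt. auto.
Qed.

Lemma E_lin a b f g : forall t C, expect N W (fun D => a * f D + b * g D) t C =
  a * expect N W f t C + b * expect N W g t C.
Proof.
  intro t; induction t; intro C. reflexivity.
  rewrite !expect_S. rewrite <- !sumN_scal, <- sumN_plus. apply sumN_ext; intros.
  rewrite <- !sumN_scal, <- sumN_plus. apply sumN_ext; intros. rewrite IHt. ring.
Qed.

Lemma E_mono f g : (forall D, f D <= g D) -> forall t C, expect N W f t C <= expect N W g t C.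
Proof.
  intros H t; induction t; intro C. simpl. apply H.
  rewrite !expect_S. apply sumN_le; intros; apply sumN_le; intros.
  apply Rmult_le_compat_l; auto.
  apply Rmult_le_pos. left. apply Rinv_0_lt_compat, INRN_pos. destruct HW as [Hw1 _]. apply Hw1; auto.
Qed.

Lemma E_const c : forall t C, expect N W (fun _ => c) t C = c.
Proof.
  intro t; induction t; intro C. reflexivity.
  rewrite expect_S.
  rewrite (sumN_ext N _ (fun i => (/ INR N * c))).
  - rewrite sumN_const. field. pose proof INRN_pos; lra.
  - intros i Hi. rewrite (sumN_ext N _ (fun j => (/ INR N * c) * W i j)).
    + rewrite sumN_scal. destruct HW as [_ H2]. rewrite H2 by auto. ring.
    + intros; rewrite IHt; ring.
Qed.

Lemma E_inv (Q : config -> Prop) g c :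
  (forall D i j, (i < N)%nat -> (j < N)%nat -> Q D -> Q (update D i j)) ->
  (forall D, Q D -> g D = c) -> forall t D, Q D -> expect N W g t D = c.
Proof.
  intros HQ Hg t; induction t; intros D HD. simpl; auto.
  rewrite expect_S. rewrite <- (E_const c (S t) D), expect_S.
  apply sumN_ext; intros; apply sumN_ext; intros. rewrite IHt, E_const; auto.
Qed.

Lemma E_semi g : forall t s C, expect N W g (t + s) C = expect N W (fun D => expect N W g s D) t C.
Proof.
  intro t; induction t; intros s C. reflexivity.
  simpl plus. rewrite !expect_S. apply sumN_ext; intros; apply sumN_ext; intros. rewrite IHt. auto.
Qed.

End Chain.

Definition allres (N : nat) (D : config) : bool := forallb (fun k => negb (D k)) (seq 0 N).
Definition nonabs (N : nat) (D : config) : R :=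
  if all_mutant N D then 0 else if allres N D then 0 else 1.

Lemma allmut_iff N D : all_mutant N D = true <-> (forall k, (k < N)%nat -> D k = true).
Proof.
  unfold all_mutant. rewrite forallb_forall. split; intros H k Hk.
  - apply H. apply in_seq. lia.
  - apply in_seq in Hk. apply H. lia.
Qed.

Lemma allres_iff N D : allres N D = true <-> (forall k, (k < N)%nat -> D k = false).
Proof.
  unfold allres. rewrite forallb_forall. split; intros H k Hk.
  - apply Bool.negb_true_iff. apply H. apply in_seq. lia.
  - apply in_seq in Hk. apply Bool.negb_true_iff. apply H. lia.
Qed.

Lemma dec_all (D : config) b n : (forall k, (k < n)%nat -> D k = b) \/ (exists a, (a < n)%nat /\ D a = negb b).
Proof.
  induction n. left; intros; lia.
  destruct IHn as [H|[a Ha]].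
  - destruct (Bool.bool_dec (D n) b).
    + left. intros k Hk. destruct (Nat.eq_dec k n). subst; auto. apply H; lia.
    + right. exists n. split. lia. destruct b, (D n); simpl in *; congruence.
  - right. exists a. split. lia. tauto.
Qed.

Lemma notallmut N D : all_mutant N D = false -> exists a, (a < N)%nat /\ D a = false.
Proof.
  intro H. destruct (dec_all D true N) as [H1|H1]; auto.
  apply allmut_iff in H1. congruence.
Qed.

Lemma notallres N D : allres N D = false -> exists a, (a < N)%nat /\ D a = true.
Proof.
  intro H. destruct (dec_all D false N) as [H1|H1]; auto.
  apply allres_iff in H1. congruence.
Qed.

Lemma allmut_upd N D i j : (i < N)%nat -> all_mutant N D = true -> all_mutant N (update D i j) = true.
Proof.
  intros Hi H. rewrite allmut_iff in *. intros k Hk. unfold update.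
  destruct (Nat.eqb k j); apply H; auto.
Qed.

Lemma allres_upd N D i j : (i < N)%nat -> allres N D = true -> allres N (update D i j) = true.
Proof.
  intros Hi H. rewrite allres_iff in *. intros k Hk. unfold update.
  destruct (Nat.eqb k j); apply H; auto.
Qed.

Lemma mut_res_excl N D : (0 < N)%nat -> all_mutant N D = true -> allres N D = true -> False.
Proof.
  intros HN H1 H2. rewrite allmut_iff in H1; rewrite allres_iff in H2.
  specialize (H1 0%nat HN); specialize (H2 0%nat HN). congruence.
Qed.

Fixpoint nres (n : nat) (D : config) : nat :=
  match n with O => O | S m => (nres m D + (if D m then 0 else 1))%nat end.

Lemma nres_zero n D : nres n D = O -> forall k, (k < n)%nat -> D k = true.
Proof.
  induction n; simpl; intros H k Hk. lia.
  destruct (D n) eqn:E.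
  - destruct (Nat.eq_dec k n). subst; auto. apply IHn; lia.
  - lia.
Qed.

Lemma nres_le n D : (nres n D <= n)%nat.
Proof. induction n; simpl. lia. destruct (D n); lia. Qed.

Lemma nres_upd n D i j : D i = true -> D j = false ->
  (nres n (update D i j) + (if Nat.ltb j n then 1 else 0) = nres n D)%nat.
Proof.
  intros Hi Hj. induction n. reflexivity.
  simpl. unfold update at 2. revert IHn.
  destruct (Nat.eqb_spec n j).
  - subst j. rewrite Hi, Hj. destruct (Nat.ltb_spec n n); destruct (Nat.ltb_spec n (S n)); lia.
  - destruct (Nat.ltb_spec j n); destruct (Nat.ltb_spec j (S n)); try lia;
    destruct (D n); lia.
Qed.

Lemma reach_lt N W a b : reach N W a b -> (a < N)%nat -> (b < N)%nat.
Proof. induction 1; auto. Qed.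

Lemma find_edge N W (D : config) a b : reach N W a b -> (a < N)%nat -> D a = true -> D b = false ->
  exists i j, (i < N)%nat /\ (j < N)%nat /\ D i = true /\ D j = false /\ edge W i j.
Proof.
  induction 1; intros Ha Da Db. congruence.
  destruct (D j) eqn:E.
  - exists j, k. repeat split; auto. eapply reach_lt; eauto.
  - apply IHreach; auto.
Qed.

Fixpoint minN (n : nat) (f : nat -> R) : R :=
  match n with O => 1 | S k => Rmin (minN k f) (f k) end.

Lemma minN_pos n f : (forall k, (k < n)%nat -> 0 < f k) -> 0 < minN n f.
Proof. induction n; simpl; intros H. lra. apply Rmin_glb_lt. apply IHn; intros; apply H; lia. apply H; lia. Qed.

Lemma minN_le n f k : (k < n)%nat -> minN n f <= f k.
Proof.
  induction n; simpl; intros Hk. lia.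
  destruct (Nat.eq_dec k n). subst. apply Rmin_r.
  eapply Rle_trans. apply Rmin_l. apply IHn; lia.
Qed.

Lemma minN_le1 n f : minN n f <= 1.
Proof. induction n; simpl. lra. eapply Rle_trans. apply Rmin_l. auto. Qed.

Lemma pow_le1 (x : R) n : 0 <= x <= 1 -> x ^ n <= 1.
Proof. intros H. induction n; simpl. lra. assert (0 <= x ^ n) by (apply pow_le; lra). nra. Qed.

Lemma pow_dec (x : R) a b : 0 <= x <= 1 -> (a <= b)%nat -> x ^ b <= x ^ a.
Proof.
  intros H Hab. replace b with (a + (b - a))%nat by lia. rewrite pow_add.
  assert (0 <= x ^ a) by (apply pow_le; lra). pose proof (pow_le1 x (b - a) H).
  assert (0 <= x ^ (b-a)) by (apply pow_le; lra). nra.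
Qed.

Lemma bernoulli (a : R) n : 0 <= a <= 1 -> 1 - INR n * a <= (1 - a) ^ n.
Proof.
  intros H. induction n. simpl. lra.
  rewrite S_INR. simpl. assert (0 <= INR n) by apply pos_INR.
  assert ((1 - a) * (1 - INR n * a) <= (1 - a) * (1 - a) ^ n) by (apply Rmult_le_compat_l; lra).
  nra.
Qed.

Lemma fold_min_bounds (l : list nat) (f : nat -> R) b lo hi :
  lo <= b <= hi -> (forall i, In i l -> lo <= f i <= hi) ->
  lo <= fold_right Rmin b (map f l) <= hi.
Proof.
  induction l; simpl; intros Hb H. auto.
  destruct (IHl Hb (fun i Hi => H i (or_intror Hi))). destruct (H a (or_introl eq_refl)).
  split. apply Rmin_glb; auto. eapply Rle_trans. apply Rmin_l. auto.
Qed.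

Definition mw (N : nat) (W : nat -> nat -> R) : R :=
  minN N (fun i => minN N (fun j => if Rlt_dec 0 (W i j) then / INR N * W i j else 1)).

Section Main.
Variable N : nat.
Variable W : nat -> nat -> R.
Hypothesis HN : (0 < N)%nat.
Hypothesis HW : weight_matrix N W.
Hypothesis Hsc : strongly_connected N W.

Let Fk k D := expect N W (fun D => indic (all_mutant N D)) k D.

Lemma mw_pos : 0 < mw N W.
Proof.
  unfold mw. apply minN_pos; intros; apply minN_pos; intros.
  cbv beta. destruct (Rlt_dec 0 (W k k0)). apply Rmult_lt_0_compat; auto. apply Rinv_0_lt_compat, lt_0_INR; auto. lra.
Qed.

Lemma mw_le1 : mw N W <= 1.
Proof. apply minN_le1. Qed.

Lemma mw_edge i j : (i < N)%nat -> (j < N)%nat -> edge W i j -> mw N W <= / INR N * W i j.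
Proof.
  intros Hi Hj He. unfold mw. eapply Rle_trans. apply (minN_le _ _ i Hi).
  eapply Rle_trans. apply (minN_le _ _ j Hj). cbv beta. destruct (Rlt_dec 0 (W i j)). apply Rle_refl. contradiction.
Qed.

Lemma Fk_nonneg k D : 0 <= Fk k D.
Proof.
  unfold Fk. rewrite <- (E_const N W HN HW 0 k D). apply E_mono; auto.
  intro. unfold indic. destruct (all_mutant N D0); lra.
Qed.

Lemma Fk_allmut k D : all_mutant N D = true -> Fk k D = 1.
Proof.
  intro H. unfold Fk. apply (E_inv N W HN HW (fun D => all_mutant N D = true)); auto.
  - intros; apply allmut_upd; auto.
  - intros D0 ->; reflexivity.
Qed.

Lemma Fk_allres k D : allres N D = true -> Fk k D = 0.
Proof.
  intro H. unfold Fk. apply (E_inv N W HN HW (fun D => allres N D = true)); auto.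
  - intros; apply allres_upd; auto.
  - intros D0 H0. unfold indic. destruct (all_mutant N D0) eqn:E; auto.
    exfalso; eapply mut_res_excl; eauto.
Qed.

Lemma lower k : forall D, (nres N D <= k)%nat -> (exists a, (a < N)%nat /\ D a = true) ->
  mw N W ^ k <= Fk k D.
Proof.
  pose proof mw_pos. pose proof mw_le1.
  induction k; intros D Hn [a [Ha Da]].
  - assert (all_mutant N D = true).
    { apply allmut_iff. apply nres_zero. lia. }
    unfold Fk; simpl. rewrite H1. simpl. lra.
  - destruct (all_mutant N D) eqn:E.
    + rewrite Fk_allmut; auto. apply pow_le1; lra.
    + destruct (notallmut N D E) as [b [Hb Db]].
      destruct (find_edge N W D a b (Hsc a b Ha Hb) Ha Da Db) as [i [j [Hi [Hj [Di [Dj He]]]]]].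
      assert (IHk' : mw N W ^ k <= Fk k (update D i j)).
      { apply IHk.
        - pose proof (nres_upd N D i j Di Dj). destruct (Nat.ltb_spec j N); lia.
        - exists i. split; auto. unfold update. destruct (Nat.eqb i j); auto. }
      unfold Fk at 1. rewrite expect_S.
      assert (Hnn : forall i0 j0, (i0 < N)%nat -> (j0 < N)%nat ->
        0 <= / INR N * W i0 j0 * expect N W (fun D0 => indic (all_mutant N D0)) k (update D i0 j0)).
      { intros. apply Rmult_le_pos. apply Rmult_le_pos.
        left; apply Rinv_0_lt_compat, lt_0_INR; auto. destruct HW as [Hw _]; apply Hw; auto.
        apply Fk_nonneg. }
      eapply Rle_trans; [| apply sumN_ge_term with (k := i); auto].
      2:{ intros. replace 0 with (sumN N (fun _ => 0)) by (rewrite sumN_const; ring).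
          apply sumN_le. intros; apply Hnn; auto. }
      eapply Rle_trans; [| apply sumN_ge_term with (k := j); auto].
      simpl pow. pose proof (mw_edge i j Hi Hj He).
      assert (0 <= mw N W ^ k) by (apply pow_le; lra).
      apply Rmult_le_compat; try lra. exact IHk'.
Qed.

End Main.

Section Geo.
Variable N : nat.
Variable W : nat -> nat -> R.
Hypothesis HN : (0 < N)%nat.
Hypothesis HW : weight_matrix N W.
Hypothesis Hsc : strongly_connected N W.

Let u t C := expect N W (nonabs N) t C.
Let dl := mw N W ^ N.

Lemma E_scal a f t C : expect N W (fun D => a * f D) t C = a * expect N W f t C.
Proof.
  rewrite (E_ext N W (fun D => a * f D) (fun D => a * f D + 0 * f D)) by (intro; ring).
  rewrite E_lin. ring.
Qed.

Lemma E_sub f g t C : expect N W (fun D => f D - g D) t C = expect N W f t C - expect N W g t C.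
Proof.
  rewrite (E_ext N W (fun D => f D - g D) (fun D => 1 * f D + (-1) * g D)) by (intro; ring).
  rewrite E_lin. ring.
Qed.

Lemma nonabs_01 D : 0 <= nonabs N D <= 1.
Proof. unfold nonabs. destruct (all_mutant N D), (allres N D); lra. Qed.

Lemma u_01 t C : 0 <= u t C <= 1.
Proof.
  unfold u. split.
  - rewrite <- (E_const N W HN HW 0 t C). apply E_mono; auto. intro; apply nonabs_01.
  - rewrite <- (E_const N W HN HW 1 t C). apply E_mono; auto. intro; apply nonabs_01.
Qed.

Lemma dl_01 : 0 < dl <= 1.
Proof.
  pose proof (mw_pos N W HN). pose proof (mw_le1 N W). split. apply pow_lt; auto. apply pow_le1; lra.
Qed.

Lemma uN_bound D : expect N W (nonabs N) N D <= (1 - dl) * nonabs N D.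
Proof.
  pose proof dl_01.
  destruct (all_mutant N D) eqn:E1.
  - rewrite (E_inv N W HN HW (fun D => all_mutant N D = true) (nonabs N) 0); auto.
    + unfold nonabs; rewrite E1; lra.
    + intros; apply allmut_upd; auto.
    + intros D0 H0; unfold nonabs; rewrite H0; auto.
  - destruct (allres N D) eqn:E2.
    + rewrite (E_inv N W HN HW (fun D => allres N D = true) (nonabs N) 0); auto.
      * unfold nonabs; rewrite E1, E2; lra.
      * intros; apply allres_upd; auto.
      * intros D0 H0; unfold nonabs; rewrite H0. destruct (all_mutant N D0); auto.
    + unfold nonabs at 2. rewrite E1, E2.
      eapply Rle_trans. apply (E_mono N W HN HW _ (fun D => 1 - indic (all_mutant N D))).
      { intro D0. unfold nonabs, indic. destruct (all_mutant N D0), (allres N D0); lra. }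
      rewrite E_sub, E_const; auto.
      pose proof (lower N W HN HW Hsc N D (nres_le N D) (notallres N D E2)).
      unfold dl. lra.
Qed.

Lemma u_step t C : u (t + N)%nat C <= (1 - dl) * u t C.
Proof.
  unfold u. rewrite E_semi. rewrite <- E_scal. apply E_mono; auto. intro; apply uN_bound.
Qed.

Definition rho := 1 - dl / (2 * INR N).

Lemma rho_prop : 0 < rho < 1 /\ 1 - dl <= rho ^ N.
Proof.
  pose proof dl_01. assert (HNr : 1 <= INR N) by (apply (le_INR 1); lia).
  assert (0 < dl / (2 * INR N) <= dl / 2).
  { split. apply Rdiv_lt_0_compat; lra. unfold Rdiv. apply Rmult_le_compat_l. lra.
    apply Rinv_le_contravar; lra. }
  unfold rho. split. lra.
  pose proof (bernoulli (dl / (2 * INR N)) N ltac:(lra)).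
  replace (INR N * (dl / (2 * INR N))) with (dl / 2) in H1 by (field; lra). lra.
Qed.

Lemma u_geo : forall t C, u t C * rho ^ N <= rho ^ t.
Proof.
  destruct rho_prop as [Hr Hr2].
  intro t. induction t as [t IH] using (well_founded_induction lt_wf). intro C.
  destruct (Nat.lt_ge_cases t N).
  - pose proof (u_01 t C). pose proof (pow_dec rho t N ltac:(lra) ltac:(lia)).
    assert (0 <= rho ^ N) by (apply pow_le; lra). nra.
  - pose proof (u_step (t - N) C). replace (t - N + N)%nat with t in H0 by lia.
    pose proof (IH (t - N)%nat ltac:(lia) C).
    assert (0 <= rho ^ N) by (apply pow_le; lra).
    pose proof (u_01 (t - N) C). pose proof dl_01.
    replace t with (N + (t - N))%nat at 2 by lia. rewrite pow_add.
    assert (u t C <= rho ^ N * u (t - N)%nat C) by nra.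
    assert (u t C * rho ^ N <= rho ^ N * u (t - N)%nat C * rho ^ N) by (apply Rmult_le_compat_r; lra).
    assert (rho ^ N * (u (t - N)%nat C * rho ^ N) <= rho ^ N * rho ^ (t - N)) by (apply Rmult_le_compat_l; lra).
    nra.
Qed.

Lemma P_bounds i t C : (i < N)%nat ->
  Ffix N W t C <= Pmut N W i t C <= Ffix N W t C + u t C.
Proof.
  intro Hi. unfold Pmut, Ffix.
  assert (0 <= expect N W (fun D => indic (D i) - indic (all_mutant N D)) t C <= u t C).
  { split.
    - rewrite <- (E_const N W HN HW 0 t C). apply E_mono; auto. intro D.
      unfold indic. destruct (all_mutant N D) eqn:E.
      + rewrite allmut_iff in E. rewrite E; auto. lra.
      + destruct (D i); lra.
    - unfold u. apply E_mono; auto. intro D. unfold indic, nonabs.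
      destruct (all_mutant N D) eqn:E.
      + rewrite allmut_iff in E. rewrite E; auto. lra.
      + destruct (allres N D) eqn:E2.
        * rewrite allres_iff in E2. rewrite E2; auto. lra.
        * destruct (D i); lra. }
  rewrite E_sub in H. lra.
Qed.

Lemma F_step t C : 0 <= Ffix N W (S t) C - Ffix N W t C <= u t C.
Proof.
  unfold Ffix. replace (S t) with (t + 1)%nat by lia. rewrite E_semi.
  rewrite <- E_sub. split.
  - rewrite <- (E_const N W HN HW 0 t C). apply E_mono; auto. intro D.
    destruct (all_mutant N D) eqn:E.
    + rewrite (Fk_allmut N W HN HW 1 D E). change (indic true) with 1. lra.
    + change (indic false) with 0. pose proof (Fk_nonneg N W HN HW 1 D). simpl in H |- *. lra.
  - unfold u. apply E_mono; auto. intro D. unfold nonabs.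
    destruct (all_mutant N D) eqn:E.
    + rewrite (Fk_allmut N W HN HW 1 D E). change (indic true) with 1. lra.
    + destruct (allres N D) eqn:E2.
      * rewrite (Fk_allres N W HN HW 1 D E2). change (indic false) with 0. lra.
      * change (indic false) with 0.
        assert (expect N W (fun D => indic (all_mutant N D)) 1 D <= 1).
        { rewrite <- (E_const N W HN HW 1 1 D). apply E_mono; auto. intro. unfold indic.
          destruct (all_mutant N D0); lra. }
        lra.
Qed.

Lemma Pmin_bounds t C : Ffix N W t C <= Pmin N W t C <= Ffix N W t C + u t C.
Proof.
  unfold Pmin. apply fold_min_bounds.
  - apply P_bounds; auto.
  - intros i Hi. apply in_seq in Hi. apply P_bounds. lia.
Qed.

End Geo.

Theorem theorem7 (N : nat) (W : nat -> nat -> R) (C : config) (FC : R)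
  (HN : (0 < N)%nat)
  (HW : weight_matrix N W)
  (Hsc : strongly_connected N W)
  (HFC : Un_cv (fun t => Ffix N W t C) FC)
  (HFpos : 0 < FC) :
  exists L tC,
    infinite_sum (fun t => INR (S t) * (Pmin N W (S t) C - Pmin N W t C)) L /\
    mean_fix_time N W C FC tC /\
    L / FC <= tC.
Proof.
  destruct (rho_prop N W HN) as [Hr Hr2].
  assert (HrN : 0 < rho N W ^ N) by (apply pow_lt; lra).
  set (K := / rho N W ^ N).
  assert (HK : 0 < K) by (apply Rinv_0_lt_compat; auto).
  assert (Hu : forall t, expect N W (nonabs N) t C <= K * rho N W ^ t).
  { intro t. pose proof (u_geo N W HN HW Hsc t C).
    unfold K. apply (Rmult_le_reg_r (rho N W ^ N)); auto.
    replace (/ rho N W ^ N * rho N W ^ t * rho N W ^ N) with (rho N W ^ t) by (field; lra). lra. }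
  assert (Hrt : forall t, 0 <= rho N W ^ t) by (intro; apply pow_le; lra).
  destruct (abstract_main (fun t => Pmin N W t C) (fun t => Ffix N W t C)
     (fun t => expect N W (nonabs N) t C) K (rho N W)) as [L [Sm [H1 [H2 H3]]]].
  - lra.
  - lra.
  - exact Hu.
  - intro t. apply Pmin_bounds; auto.
  - intro t. pose proof (F_step N W HN HW t C). pose proof (Hu t). pose proof (Hrt t).
    apply Rabs_le. assert (0 <= K * rho N W ^ t) by (apply Rmult_le_pos; lra). lra.
  - intro t. pose proof (F_step N W HN HW t C). pose proof (Hu t). pose proof (Hu (S t)).
    pose proof (Pmin_bounds N W HN HW t C). pose proof (Pmin_bounds N W HN HW (S t) C).
    pose proof (u_01 N W HN HW t C). pose proof (u_01 N W HN HW (S t) C).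
    assert (rho N W ^ S t <= rho N W ^ t) by (apply pow_dec; lia || lra).
    assert (K * rho N W ^ S t <= K * rho N W ^ t) by (apply Rmult_le_compat_l; lra).
    assert (0 <= K * rho N W ^ t) by (apply Rmult_le_pos; auto; lra).
    apply Rabs_le. lra.
  - exists L, (Sm / FC). split; [exact H1|]. split.
    + exists Sm. split; [exact H2 | reflexivity].
    + unfold Rdiv. apply Rmult_le_compat_r; auto. left; apply Rinv_0_lt_compat; auto.
Qed.
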